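(* Let $k\ge2$, $p\in(0,1)$, $q=1-p$. For all $n\ge1$, $$f^{(k)}_n=p^{(k-1)n}\sum_{i=0}^{n-1}\frac{n-i}{n}\binom{(k-1)n+i-1}{i}q^i.$$
   Context: Let $s^{(k)}_i=\frac{k-1}{ki-1}\binom{ki-1}{i-1}$ ($i\ge1$), $S^{(k)}(z)=\sum_{i\ge1}s^{(k)}_iz^i$, and define $f^{(k)}_0,f^{(k)}_1,\dots$ by the formal power series identity $\sum_{i\ge0}f^{(k)}_iz^i=\dfrac{1}{1-\frac1qS^{(k)}(p^{k-1}qz)}$. (In the $k$-box matchbox process with big-chooser probability $p$ and little-chooser probability $q$, $f^{(k)}_n$ is the probability that after $kn$ steps all boxes contain equal numbers of matches.) *)

(* Defs.v *)
From mathcomp Require Import all_boot all_order all_algebra.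
Set Implicit Arguments. Unset Strict Implicit. Unset Printing Implicit Defensive.
Import Order.TTheory GRing.Theory Num.Theory.
Local Open Scope ring_scope.

Definition scoef {R : fieldType} (k i : nat) : R :=
  (k.-1)%:R / (k * i).-1%:R * ('C((k * i).-1, i.-1))%:R.

(* Coefficient of z^i in the formal power series (1/q) S^(k)(p^(k-1) q z);
   the constant coefficient is 0 since S has no constant term. *)
Definition Gcoef {R : fieldType} (k : nat) (p q : R) (i : nat) : R :=
  if i is 0 then 0 else q^-1 * scoef k i * (p ^+ k.-1 * q) ^+ i.

(* f is the coefficient sequence of 1 / (1 - G(z)), i.e. the formal power
   series identity F(z) * (1 - G(z)) = 1, written coefficientwise. *)
Definition is_f_seq {R : fieldType} (k : nat) (p q : R) (f : nat -> R) : Prop :=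
  forall n : nat,
    f n - \sum_(i < n.+1) Gcoef k p q i * f (n - i)%N = (n == 0%N)%:R.

(* Main.v *)
Require Import Defs.
From mathcomp Require Import all_boot all_order all_algebra.
From mathcomp Require Import zify ring.
Import Order.TTheory GRing.Theory Num.Theory.
Local Open Scope ring_scope.

Definition gg {R : fieldType} (b t x : nat) : R :=
  if t is t'.+1 then ('C(x + b * t, t))%:R - (b * 'C((x + b * t).-1, t'))%:R else 1.
Arguments gg : simpl never.

Lemma binC_diag b t : (0 < b)%N -> 'C(b * t.+1, t.+1) = (b * 'C((b * t.+1).-1, t))%N.
Proof.
move=> hb; have := mul_bin_diag (b * t.+1) t.
set C1 := 'C(_, t); set C2 := 'C(_, _.+1) => H.
apply/eqP; rewrite -(eqn_pmul2l (ltn0Sn t)); apply/eqP.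
rewrite -H; lia.
Qed.

Lemma gg_x0 {R : fieldType} b t : (0 < b)%N -> gg b t 0 = (t == 0%N)%:R :> R.
Proof.
move=> hb; case: t => [|t] //; rewrite /gg add0n binC_diag // subrr //.
Qed.

Lemma gg_rec {R : fieldType} b t x : (0 < b)%N ->
  gg b t x.+1 = gg b t x + (if t is t'.+1 then gg b t' (x + b) else 0) :> R.
Proof.
move=> hb; case: t => [|t]; first by rewrite addr0.
case: t => [|t].
  rewrite /gg !muln1 !bin1 !bin0 !muln1.
  by rewrite addSn /= -addn1 natrD; ring.
rewrite /gg.
have e1 : (x.+1 + b * t.+2 = (x + b * t.+2).+1)%N by lia.
have e2 : ((x + b * t.+2).-1 = ((x + b * t.+2).-2).+1)%N by lia.
have e3 : (x + b + b * t.+1 = x + b * t.+2)%N by lia.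
rewrite e1 e3 /= binS.
set N := (x + b * t.+2)%N.
have e5 : N = (N.-1).+1 by rewrite /N; lia.
have P : 'C(N, t.+1) = ('C(N.-1, t.+1) + 'C(N.-1, t))%N by rewrite {1}e5 binS.
rewrite [X in (b * X)%N]P !mulnDr !natrD; ring.
Qed.

Lemma gg_conv {R : fieldType} b n : (0 < b)%N -> forall x y,
  \sum_(t < n.+1) gg b t x * gg b (n - t) y = gg b n (x + y) :> R.
Proof.
move=> hb; elim: n => [|n IHn] x y.
  by rewrite big_ord1 /= mul1r.
elim: x => [|x IHx].
  rewrite big_ord_recl subn0 [gg b 0 0]/= mul1r big1 ?addr0 // => i _.
  by rewrite gg_x0 //= mul0r.
under eq_bigr => i _ do rewrite gg_rec // mulrDl.
rewrite big_split /= IHx big_ord_recl /= mul0r add0r.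
under eq_bigr => i _ do rewrite subSS.
rewrite IHn addSn gg_rec // addnAC //.
Qed.

Lemma scoef_gg {R : numFieldType} k j : (2 <= k)%N ->
  scoef k j.+1 = gg k j k.-1 :> R.
Proof.
case: k => [|[|c]] // _; rewrite /scoef.
case: j => [|j].
  by rewrite muln1 bin0 mulr1 /= divff // pnatr_eq0.
set N := (c.+2 * j.+2).-1.
have HN : N = (c.+1 + c.+2 * j.+1)%N by rewrite /N; lia.
rewrite /gg /= -HN.
have E : (c + c.+2 * j.+1 = N.-1)%N by rewrite HN; lia.
rewrite E; have H := mul_bin_diag N j.
move: H; set A := 'C(N, j.+1); set B := 'C(_, j) => H.
have HR : (N%:R * B%:R = (j.+1)%:R * A%:R :> R) by rewrite -!natrM H.
have N0 : (N%:R != 0 :> R) by rewrite pnatr_eq0 HN.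
have HN' : (N%:R = (c.+2)%:R * (j.+2)%:R - 1 :> R).
  have E2 : (c.+2 * j.+2 = N.+1)%N by rewrite HN; lia.
  by rewrite -natrM E2 -natr1 addrK.
apply: (mulfI N0); rewrite natrM mulrA mulrCA divff // mulr1 mulrBr.
rewrite mulrCA HR HN'.
rewrite -!natr1; ring.
Qed.

Lemma coef_gg {R : numFieldType} k n j : (2 <= k)%N -> (j < n)%N ->
  (n - j)%:R / n%:R * ('C((k.-1 * n + j).-1, j))%:R = gg k j (k.-1 * (n - j)) :> R.
Proof.
case: k => [|[|c]] // _ hj.
have n0 : (n%:R != 0 :> R) by rewrite pnatr_eq0; lia.
case: j hj => [|j] hj.
  by rewrite subn0 bin0 mulr1 divff.
rewrite /gg /=.
set M := (c.+1 * n)%N.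
have E1 : (c.+1 * (n - j.+1) + c.+2 * j.+1 = (M + j).+1)%N by rewrite /M; lia.
have E2 : ((M + j.+1).-1 = M + j)%N by lia.
rewrite E1 E2 -/M binS.
have H := mul_bin_left (M + j) j.
move: H; rewrite (_ : (M + j - j = M)%N); last by lia.
set A := 'C(M + j, j.+1); set B := 'C(M + j, j) => H.
have HR : ((j.+1)%:R * A%:R = M%:R * B%:R :> R) by rewrite -!natrM H.
apply: (mulfI n0); rewrite mulrA mulrCA divff // mulr1.
rewrite natrB; last by lia.
rewrite mulrBl HR /M natrM; rewrite -!natr1; ring.
Qed.

Lemma tri_sum {R : fieldType} (F : nat -> nat -> R) n :
  \sum_(i < n) \sum_(j < (n - i)%N) F i j = \sum_(u < n) \sum_(t < u.+1) F t (u - t)%N.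
Proof.
elim: n => [|n IH]; first by rewrite !big_ord0.
rewrite big_ord_recr /= [RHS]big_ord_recr /= -IH subSnn big_ord1.
rewrite [\sum_(t < n.+1) _]big_ord_recr /= subnn addrA; congr (_ + _).
rewrite -big_split /=; apply: eq_bigr => i _.
by rewrite subSn ?big_ord_recr //= ltnW.
Qed.

Definition hh {R : fieldType} (k : nat) (q : R) (n : nat) : R :=
  \sum_(u < n.+1) q ^+ u * gg k u (k.-1 * (n - u)).

Lemma hh_rec {R : numFieldType} k (q : R) N : (2 <= k)%N ->
  hh k q N.+1 = \sum_(i < N.+1) scoef k i.+1 * q ^+ i * hh k q (N - i).
Proof.
move=> hk; have hb : (0 < k)%N by lia.
pose F := fun i j => gg k i k.-1 * q ^+ (i + j) * (gg k j (k.-1 * (N - i - j)) : R).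
transitivity (\sum_(i < N.+1) \sum_(j < (N.+1 - i)%N) F i j); last first.
  apply: eq_bigr => i _; rewrite scoef_gg // /hh -subSn; last by rewrite -ltnS.
  rewrite big_distrr /=; apply: eq_bigr => j _.
  by rewrite /F exprD; ring.
rewrite tri_sum /hh big_ord_recr /= subnn muln0 gg_x0 // mulr0 addr0.
apply: eq_bigr => u _.
have Hu : (u <= N)%N by rewrite -ltnS.
rewrite /F.
under eq_bigr => t _.
  rewrite subnKC; last by rewrite -ltnS.
  rewrite (_ : (N - t - (u - t) = N - u)%N); last by have := ltn_ord t; lia.
  over.
under [RHS]eq_bigr => t _ do rewrite mulrAC.
rewrite /= -big_distrl /= gg_conv // mulrC; congr (_ * _); congr (gg _ _ _).
by rewrite subSn // mulnS.
Qed.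

Theorem proposition5p7 (R : realFieldType) (k : nat) (p q : R) (f : nat -> R) :
  (2 <= k)%N -> 0 < p -> p < 1 -> q = 1 - p ->
  is_f_seq k p q f ->
  forall n : nat, (1 <= n)%N ->
    f n = p ^+ (k.-1 * n) *
          \sum_(i < n) ((n - i)%:R / n%:R *
                        ('C((k.-1 * n + i).-1, i))%:R * q ^+ i).
Proof.
move=> hk hp hp1 hq hf.
have hb : (0 < k)%N by lia.
have q0 : q != 0 by rewrite hq subr_eq0 eq_sym lt_eqF.
have key : forall n, f n = p ^+ (k.-1 * n) * hh k q n.
  elim/ltn_ind => n IH.
  have := hf n; rewrite big_ord_recl subn0.
  case: n IH => [|N] IH.
    rewrite big_ord0 /= addr0 mul0r subr0 => ->.
    by rewrite muln0 expr0 mul1r /hh big_ord1 expr0 mul1r.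
  have -> : Gcoef k p q ord0 = 0 by [].
  rewrite mul0r add0r => /eqP; rewrite subr_eq /= add0r => /eqP ->.
  rewrite hh_rec // big_distrr /=; apply: eq_bigr => i _.
  have Hi : (i <= N)%N by rewrite -ltnS.
  rewrite subSS IH; last by lia.
  have E : (k.-1 * N.+1 = k.-1 * i.+1 + k.-1 * (N - i))%N.
    by rewrite -mulnDr; congr (_ * _); lia.
  rewrite /Gcoef E exprD exprMn -exprM exprS.
  by field.
move=> n hn; rewrite key; congr (_ * _).
rewrite /hh big_ord_recr /= subnn muln0 gg_x0 // (_ : (n == 0%N) = false); last by lia.
rewrite mulr0 addr0; apply: eq_bigr => i _.
by rewrite -coef_gg // mulrC.
Qed.
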